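(* Fix $0<s_{\min}<s_{\max}$ and $\epsilon>0$ small, and let $\alpha=R/(R+d)$. There is $T_*>0$ such that for every $\tilde T\ge T_*$ and every pair of points $r,r'$ on the left arc $\partial\Gamma_L$ of $\partial\Gamma$ (or both on the right arc $\partial\Gamma_R$), there exists a path of a single particle from $r$ to $r'$ consisting of free flights between successive collisions with $\partial\Gamma$ (possibly with specular reflections off $L_u\cup L_d$), with all outgoing speeds $s$ and angles $\varphi$ at $\partial\Gamma$ satisfying $s_{\min}\le s\le s_{\max}$ and $\alpha+\epsilon\le|\sin\varphi|\le1-\epsilon$, which takes precisely time $\tilde T$ to complete. Moreover, these paths can be chosen so that the number of collisions is bounded by a monotone function of $\tilde T$.
   Context: $\Gamma$ is a closed disk of radius $R+d$ with a concentric disk $D$ of radius $R$; vertical segments $L_u,L_d$ above and below $D$ split $\Gamma\setminus D$ into a left and a right half, and a particle is confined to one half, moving in straight lines with constant speed and reflecting specularly off $L_u\cup L_d$. $\varphi$ is the angle of the outgoing velocity with the normal to $\partial\Gamma$ at the emission point; a chord leaving $\partial\Gamma$ with $|\sin\varphi|>\alpha$ does not meet $D$. *)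

(* Defs.v *)
(* concrete reals R, points of the plane as R * R.
   The disk Gamma has radius Rad + d centred at the origin, D has radius Rad,
   L_u = {0} x [Rad, Rad+d], L_d = {0} x [-(Rad+d), -Rad]. *)
From Stdlib Require Import Reals Lra.
Open Scope R_scope.

Definition pt := (R * R)%type.
Definition padd (p q : pt) : pt := (fst p + fst q, snd p + snd q).
Definition pscal (a : R) (p : pt) : pt := (a * fst p, a * snd p).
Definition nrm (p : pt) : R := sqrt (fst p ^ 2 + snd p ^ 2).

Definition refl (v : pt) : pt := (- fst v, snd v).

Definition in_half (left : bool) (z : pt) : Prop :=
  if left then fst z <= 0 else 0 <= fst z.

Definition on_arc (left : bool) (Rad d : R) (z : pt) : Prop :=
  nrm z = Rad + d /\ in_half left z.

Definition in_dom (left : bool) (Rad d : R) (z : pt) : Prop :=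
  in_half left z /\ Rad < nrm z /\ nrm z < Rad + d.

Definition toward_wall (left : bool) (v : pt) : Prop :=
  if left then 0 < fst v else fst v < 0.

(* A free flight emitted at p with velocity v, lasting time tau and ending at q:
   either a straight segment, or a straight segment hitting L_u \cup L_d at m,
   specularly reflected there, then a straight segment; all intermediate
   points stay in the particle's half of Gamma \ D and do not touch dGamma. *)
Definition flight (left : bool) (Rad d : R) (p v : pt) (tau : R) (q : pt) : Prop :=
  0 < tau /\
  ( (q = padd p (pscal tau v) /\
       forall s, 0 < s < tau -> in_dom left Rad d (padd p (pscal s v)))
  \/ exists t1, 0 < t1 < tau /\ toward_wall left v /\
       let m := padd p (pscal t1 v) in
       fst m = 0 /\
       (forall s, 0 < s <= t1 -> in_dom left Rad d (padd p (pscal s v))) /\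
       q = padd m (pscal (tau - t1) (refl v)) /\
       (forall s, 0 < s < tau - t1 -> in_dom left Rad d (padd m (pscal s (refl v))))).

(* |sin phi|, phi the angle between the outgoing velocity v at p and the
   (inward) normal to dGamma at p *)
Definition abs_sin_phi (p v : pt) : R :=
  Rabs (fst p * snd v - snd p * fst v) / (nrm p * nrm v).

Fixpoint total_time (tau : nat -> R) (n : nat) : R :=
  match n with O => 0 | S k => total_time tau k + tau k end.

(* A path of n free flights from r to r' on the given side, of total time T,
   with collision points P 0 = r, ..., P n = r', outgoing velocities V i and
   flight durations tau i, satisfying the speed and angle constraints. *)
Definition good_path (left : bool) (Rad d smin smax alpha eps : R)
    (r r' : pt) (T : R) (n : nat) (P : nat -> pt) (V : nat -> pt) (tau : nat -> R) : Prop :=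
  P O = r /\ P n = r' /\
  (forall i, (i <= n)%nat -> on_arc left Rad d (P i)) /\
  (forall i, (i < n)%nat ->
     flight left Rad d (P i) (V i) (tau i) (P (S i)) /\
     smin <= nrm (V i) <= smax /\
     alpha + eps <= abs_sin_phi (P i) (V i) <= 1 - eps) /\
  total_time tau n = T.

(* Main.v *)
Require Import Defs.
From Stdlib Require Import Reals Lra Psatz ZArith.
Open Scope R_scope.

Lemma nrm_sq z : nrm z ^ 2 = fst z ^ 2 + snd z ^ 2.
Proof. unfold nrm. apply pow2_sqrt. nra. Qed.

Lemma nrm_ge0 z : 0 <= nrm z.
Proof. unfold nrm. apply sqrt_pos. Qed.

Lemma nrm_lt z c : 0 < c -> fst z ^ 2 + snd z ^ 2 < c ^ 2 -> nrm z < c.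
Proof.
  intros Hc H. unfold nrm. rewrite <- (sqrt_pow2 c) by lra.
  apply sqrt_lt_1_alt. split; [nra|exact H].
Qed.

Lemma nrm_gt z c : 0 <= c -> c ^ 2 < fst z ^ 2 + snd z ^ 2 -> c < nrm z.
Proof.
  intros Hc H. unfold nrm. rewrite <- (sqrt_pow2 c) by lra.
  apply sqrt_lt_1_alt. split; [nra|exact H].
Qed.

Lemma nrm_eq_sq z c : nrm z = c -> fst z ^ 2 + snd z ^ 2 = c ^ 2.
Proof. intros H. rewrite <- H, nrm_sq. reflexivity. Qed.

Lemma flight_chord left Rad d p q s :
  0 < Rad -> 0 < d -> 0 < s ->
  on_arc left Rad d p -> on_arc left Rad d q ->
  0 < (fst q - fst p) ^ 2 + (snd q - snd p) ^ 2 ->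
  Rad ^ 2 * ((fst q - fst p) ^ 2 + (snd q - snd p) ^ 2) <
    (fst p * (snd q - snd p) - snd p * (fst q - fst p)) ^ 2 ->
  flight left Rad d p (pscal (s / nrm (fst q - fst p, snd q - snd p))
                         (fst q - fst p, snd q - snd p))
         (nrm (fst q - fst p, snd q - snd p) / s) q.
Proof.
  destruct p as [p1 p2], q as [q1 q2]; simpl.
  intros HR Hd Hs [Hp Hhp] [Hq Hhq] HW Hcr.
  set (w1 := q1 - p1) in *. set (w2 := q2 - p2) in *.
  set (nw := nrm (w1, w2)).
  assert (Hnw2 : nw ^ 2 = w1 ^ 2 + w2 ^ 2) by (unfold nw; rewrite nrm_sq; reflexivity).
  assert (Hnw : 0 < nw).
  { unfold nw, nrm; simpl. apply sqrt_lt_R0. lra. }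
  apply nrm_eq_sq in Hp. apply nrm_eq_sq in Hq. cbn [fst snd] in Hp, Hq.
  split. { apply Rdiv_lt_0_compat; lra. }
  left. split.
  { unfold padd, pscal; simpl. f_equal; unfold w1, w2; field; lra. }
  intros u [Hu1 Hu2].
  set (t := u * (s / nw)).
  assert (Ht0 : 0 < t). { unfold t. apply Rmult_lt_0_compat; [lra|]. apply Rdiv_lt_0_compat; lra. }
  assert (Ht1 : t < 1).
  { unfold t. apply Rmult_lt_compat_r with (r := s / nw) in Hu2; [|apply Rdiv_lt_0_compat; lra].
    replace (nw / s * (s / nw)) with 1 in Hu2 by (field; lra). lra. }
  unfold padd, pscal; simpl.
  replace (u * (s / nw * w1)) with (t * w1) by (unfold t; ring).
  replace (u * (s / nw * w2)) with (t * w2) by (unfold t; ring).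
  set (z1 := p1 + t * w1). set (z2 := p2 + t * w2).
  assert (EZ : z1 ^ 2 + z2 ^ 2 = (1 - t) * (p1 ^ 2 + p2 ^ 2) + t * (q1 ^ 2 + q2 ^ 2)
                                 - t * (1 - t) * (w1 ^ 2 + w2 ^ 2)).
  { unfold z1, z2, w1, w2. ring. }
  assert (Elag : (z1 ^ 2 + z2 ^ 2) * (w1 ^ 2 + w2 ^ 2) =
                 (p1 * w2 - p2 * w1) ^ 2 + (z1 * w1 + z2 * w2) ^ 2).
  { unfold z1, z2. ring. }
  split; [|split].
  - unfold in_half in *; simpl. destruct left; simpl in *; unfold z1, w1.
    + assert (t * q1 <= 0) by nra. nra.
    + assert (0 <= t * q1) by nra. nra.
  - apply nrm_gt; cbn [fst snd]; [lra|].
    assert (Rad ^ 2 * (w1 ^ 2 + w2 ^ 2) < (z1 ^ 2 + z2 ^ 2) * (w1 ^ 2 + w2 ^ 2)).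
    { rewrite Elag. pose proof (pow2_ge_0 (z1 * w1 + z2 * w2)). lra. }
    apply Rmult_lt_reg_r with (r := w1 ^ 2 + w2 ^ 2); lra.
  - apply nrm_lt; cbn [fst snd]; [lra|]. rewrite EZ, Hp, Hq.
    assert (0 < t * (1 - t) * (w1 ^ 2 + w2 ^ 2)).
    { apply Rmult_lt_0_compat; [apply Rmult_lt_0_compat|]; lra. }
    nra.
Qed.
Definition ptA (rho th : R) : pt := (rho * cos th, rho * sin th).
Definition dvec (p q : pt) : pt := (fst q - fst p, snd q - snd p).

Lemma sc2 x : sin x ^ 2 + cos x ^ 2 = 1.
Proof. pose proof (sin2_cos2 x). unfold Rsqr in H. lra. Qed.

Lemma nrm_ptA rho th : 0 < rho -> nrm (ptA rho th) = rho.
Proof.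
  intros H. unfold nrm, ptA; cbn [fst snd].
  replace ((rho * cos th) ^ 2 + (rho * sin th) ^ 2) with (rho ^ 2 * (sin th ^ 2 + cos th ^ 2)) by ring.
  rewrite sc2, Rmult_1_r. apply sqrt_pow2. lra.
Qed.

Lemma chord_sq rho a b :
  fst (dvec (ptA rho a) (ptA rho b)) ^ 2 + snd (dvec (ptA rho a) (ptA rho b)) ^ 2
  = 2 * rho ^ 2 * (1 - cos (b - a)).
Proof.
  unfold dvec, ptA; cbn [fst snd]. rewrite cos_minus.
  pose proof (sc2 a). pose proof (sc2 b).
  replace ((rho * cos b - rho * cos a) ^ 2 + (rho * sin b - rho * sin a) ^ 2) with
    (rho ^ 2 * (sin b ^ 2 + cos b ^ 2) + rho ^ 2 * (sin a ^ 2 + cos a ^ 2)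
     - 2 * rho ^ 2 * (cos b * cos a + sin b * sin a)) by ring.
  rewrite H, H0. ring.
Qed.

Lemma cross_eq rho a b :
  fst (ptA rho a) * snd (dvec (ptA rho a) (ptA rho b))
  - snd (ptA rho a) * fst (dvec (ptA rho a) (ptA rho b)) = rho ^ 2 * sin (b - a).
Proof. unfold dvec, ptA; cbn [fst snd]. rewrite sin_minus. ring. Qed.

Lemma nrm_pscal k z : 0 <= k -> nrm (pscal k z) = k * nrm z.
Proof.
  intros Hk. unfold nrm, pscal; cbn [fst snd].
  replace ((k * fst z) ^ 2 + (k * snd z) ^ 2) with (k ^ 2 * (fst z ^ 2 + snd z ^ 2)) by ring.
  rewrite sqrt_mult_alt by nra. rewrite sqrt_pow2 by lra. reflexivity.
Qed.

Lemma step_ok left Rad d eps s a b :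
  0 < Rad -> 0 < d -> 0 < eps -> eps < 1 -> 0 < s ->
  on_arc left Rad d (ptA (Rad + d) a) -> on_arc left Rad d (ptA (Rad + d) b) ->
  cos (b - a) < 1 ->
  2 * (Rad / (Rad + d) + eps) ^ 2 - 1 <= cos (b - a) <= 2 * (1 - eps) ^ 2 - 1 ->
  let p := ptA (Rad + d) a in let q := ptA (Rad + d) b in
  let w := dvec p q in
  flight left Rad d p (pscal (s / nrm w) w) (nrm w / s) q /\
  nrm (pscal (s / nrm w) w) = s /\
  Rad / (Rad + d) + eps <= abs_sin_phi p (pscal (s / nrm w) w) <= 1 - eps.
Proof.
  intros HR Hd He He1 Hs Hpa Hqa HC1 [HCl HCu] p q w.
  set (rho := Rad + d) in *. set (C := cos (b - a)) in *.
  assert (Hrho : 0 < rho) by (unfold rho; lra).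
  assert (HW : fst w ^ 2 + snd w ^ 2 = 2 * rho ^ 2 * (1 - C)) by (apply chord_sq).
  assert (Hcr : fst p * snd w - snd p * fst w = rho ^ 2 * sin (b - a)) by (apply cross_eq).
  assert (HS : sin (b - a) ^ 2 = 1 - C ^ 2) by (pose proof (sc2 (b - a)); unfold C; lra).
  assert (HWpos : 0 < fst w ^ 2 + snd w ^ 2).
  { rewrite HW. apply Rmult_lt_0_compat; [apply Rmult_lt_0_compat; [lra|apply pow_lt; lra]|lra]. }
  assert (Hnw : 0 < nrm w) by (unfold nrm; apply sqrt_lt_R0; lra).
  assert (Hnw2 : nrm w ^ 2 = fst w ^ 2 + snd w ^ 2) by apply nrm_sq.
  set (al := Rad / rho) in *.
  assert (Hal : al * rho = Rad) by (unfold al, rho; field; lra).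
  assert (Hal0 : 0 < al) by (unfold al; apply Rdiv_lt_0_compat; lra).
  assert (HV : nrm (pscal (s / nrm w) w) = s).
  { rewrite nrm_pscal by (apply Rlt_le, Rdiv_lt_0_compat; lra). field. lra. }
  split; [|split; [exact HV|]].
  - apply flight_chord; auto.
    + change (Rad ^ 2 * (fst w ^ 2 + snd w ^ 2) < (fst p * snd w - snd p * fst w) ^ 2).
      rewrite HW, Hcr.
      replace ((rho ^ 2 * sin (b - a)) ^ 2) with (rho ^ 4 * sin (b - a) ^ 2) by ring.
      rewrite HS. rewrite <- Hal.
      assert (E1 : (al + eps) ^ 2 - al ^ 2 = eps * (2 * al + eps)) by ring.
      assert (0 < eps * (2 * al + eps)) by (apply Rmult_lt_0_compat; lra).
      assert (1 + C - 2 * al ^ 2 > 0) by lra.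
      assert (0 < 1 - C) by lra.
      assert (0 < rho ^ 4 * (1 - C)) by (apply Rmult_lt_0_compat; [apply pow_lt|]; lra).
      assert (0 < rho ^ 4 * (1 - C) * (1 + C - 2 * al ^ 2)) by (apply Rmult_lt_0_compat; lra).
      replace (rho ^ 4 * (1 - C ^ 2)) with
        ((al * rho) ^ 2 * (2 * rho ^ 2 * (1 - C)) + rho ^ 4 * (1 - C) * (1 + C - 2 * al ^ 2)) by ring.
      lra.
  - assert (HX : abs_sin_phi p (pscal (s / nrm w) w) = rho * Rabs (sin (b - a)) / nrm w).
    { unfold abs_sin_phi. rewrite HV. assert (Hnp : nrm p = rho) by (unfold p; apply nrm_ptA; lra). rewrite Hnp.
      unfold pscal; cbn [fst snd].
      replace (fst p * (s / nrm w * snd w) - snd p * (s / nrm w * fst w))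
        with ((s / nrm w) * (fst p * snd w - snd p * fst w)) by ring.
      rewrite Hcr, Rabs_mult, Rabs_mult.
      rewrite (Rabs_right (s / nrm w)) by (apply Rle_ge, Rlt_le, Rdiv_lt_0_compat; lra).
      rewrite (Rabs_right (rho ^ 2)) by (apply Rle_ge; nra).
      field. lra. }
    rewrite HX.
    set (X := rho * Rabs (sin (b - a)) / nrm w).
    assert (HX0 : 0 <= X).
    { unfold X. apply Rmult_le_pos; [apply Rmult_le_pos; [lra|apply Rabs_pos]|].
      apply Rlt_le, Rinv_0_lt_compat; lra. }
    assert (HX2 : X ^ 2 = (1 + C) / 2).
    { unfold X. replace ((rho * Rabs (sin (b - a)) / nrm w) ^ 2)
        with (rho ^ 2 * Rabs (sin (b - a)) ^ 2 / nrm w ^ 2) by (field; lra).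
      rewrite pow2_abs. rewrite Hnw2, HW, HS. field.
      split; lra. }
    split.
    + destruct (Rle_or_lt (al + eps) X) as [H|H]; auto.
      assert (X ^ 2 < (al + eps) ^ 2) by nra. lra.
    + destruct (Rle_or_lt X (1 - eps)) as [H|H]; auto.
      assert ((1 - eps) ^ 2 < X ^ 2) by nra. lra.
Qed.

Definition Aof (left : bool) : R := if left then PI / 2 else - (PI / 2).

Lemma on_arc_ptA left Rad d th : 0 < Rad -> 0 < d ->
  Aof left <= th <= Aof left + PI -> on_arc left Rad d (ptA (Rad + d) th).
Proof.
  intros HR Hd Hth. split; [apply nrm_ptA; lra|].
  unfold in_half, ptA, Aof in *; cbn [fst snd]; destruct left.
  - assert (cos th <= 0) by (apply cos_le_0; lra). nra.
  - assert (0 <= cos th) by (apply cos_ge_0; lra). nra.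
Qed.

Lemma arc_rep left Rad d r : 0 < Rad -> 0 < d -> on_arc left Rad d r ->
  exists th, Aof left <= th <= Aof left + PI /\ r = ptA (Rad + d) th.
Proof.
  intros HR Hd [Hn Hh]. destruct r as [x y].
  set (rho := Rad + d) in *. assert (Hrho : 0 < rho) by (unfold rho; lra).
  apply nrm_eq_sq in Hn. cbn [fst snd] in Hn.
  set (u := y / rho).
  assert (Hy : y = rho * u) by (unfold u; field; lra).
  assert (Hx2 : x ^ 2 = rho ^ 2 * (1 - u²)) by (unfold Rsqr; rewrite Hy in Hn; lra).
  assert (Hu : -1 <= u <= 1).
  { assert (u ^ 2 <= 1).
    { assert (0 <= x ^ 2) by nra. assert (0 <= rho ^ 2 * (1 - u ^ 2)) by (unfold Rsqr in Hx2; nra).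
      assert (0 < rho ^ 2) by nra. nra. }
    nra. }
  assert (Hs : sqrt (1 - u²) * rho = Rabs x).
  { rewrite <- sqrt_pow2 with (x := rho) by lra.
    rewrite <- sqrt_mult_alt by (unfold Rsqr; nra).
    rewrite <- sqrt_pow2 by apply Rabs_pos. rewrite pow2_abs. f_equal. lra. }
  pose proof (asin_bound u) as Hb.
  unfold in_half, Aof in *; cbn [fst] in Hh; destruct left.
  - exists (PI - asin u). split; [lra|]. unfold ptA.
    rewrite Rtrigo_facts.cos_pi_minus, sin_PI_x, sin_asin, cos_asin by lra.
    rewrite Rabs_left1 in Hs by lra. f_equal; lra.
  - exists (asin u). split; [lra|]. unfold ptA.
    rewrite sin_asin, cos_asin by lra.
    rewrite Rabs_right in Hs by lra. f_equal; lra.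
Qed.

Lemma up_mono x y : x <= y -> (up x <= up y)%Z.
Proof.
  intros H. destruct (archimed x) as [Hx1 Hx2]. destruct (archimed y) as [Hy1 Hy2].
  destruct (Z_le_gt_dec (up x) (up y)) as [|Hg]; auto.
  assert (Hg' : (up y <= up x - 1)%Z) by lia.
  apply IZR_le in Hg'. rewrite minus_IZR in Hg'. lra.
Qed.

Lemma INR_up x : 0 <= x -> INR (Z.to_nat (up x)) = IZR (up x) /\ x < IZR (up x) <= x + 1.
Proof.
  intros H. destruct (archimed x) as [H1 H2].
  assert (Hp : (0 <= up x)%Z).
  { apply le_IZR. lra. }
  rewrite INR_IZR_INZ, Z2Nat.id by exact Hp. split; [reflexivity|lra].
Qed.

Lemma cos_window al eps h1 h2 D :
  0 < al -> al < 1 -> 0 < h1 -> h1 <= h2 -> h2 <= 1 -> h2 <= 1 - ((1 + al) / 2) ^ 2 ->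
  0 < eps -> eps <= (1 - al) / 2 -> 4 * eps < 1 - cos h1 -> h1 <= Rabs D <= h2 ->
  cos D < 1 /\ 2 * (al + eps) ^ 2 - 1 <= cos D <= 2 * (1 - eps) ^ 2 - 1.
Proof.
  intros Ha0 Ha1 Hh1 Hh12 Hh2 Hh2b He0 He1 He2 HD.
  assert (HPI : 3 < PI) by (pose proof PI2_3_2; lra).
  assert (EC : cos D = cos (Rabs D)).
  { destruct (Rle_or_lt 0 D). - rewrite Rabs_right by lra. reflexivity.
    - rewrite Rabs_left by lra. rewrite cos_neg. reflexivity. }
  rewrite EC. set (x := Rabs D) in *.
  assert (Hc1 : cos x <= cos h1).
  { destruct (Req_dec x h1) as [E|E]. - rewrite E; lra.
    - apply Rlt_le, cos_decreasing_1; lra. }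
  assert (Hc2 : cos h2 <= cos x).
  { destruct (Req_dec x h2) as [E|E]. - rewrite E; lra.
    - apply Rlt_le, cos_decreasing_1; lra. }
  assert (Hcos2 : 1 - h2 ^ 2 / 2 <= cos h2).
  { replace h2 with (2 * (h2 / 2)) at 2 by field. rewrite cos_2a_sin.
    assert (0 <= sin (h2 / 2)) by (apply sin_ge_0; lra).
    assert (sin (h2 / 2) < h2 / 2) by (apply sin_lt_x; lra).
    nra. }
  split; [lra|split].
  - assert (Hb : al + eps <= (1 + al) / 2) by lra.
    assert ((al + eps) ^ 2 <= ((1 + al) / 2) ^ 2) by (apply pow_incr; lra).
    assert (h2 ^ 2 <= h2) by nra.
    set (be := (1 + al) / 2) in *.
    assert (be ^ 2 <= 1) by (unfold be; nra).
    lra.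
  - assert (2 * (1 - eps) ^ 2 - 1 = 1 - 4 * eps + 2 * eps ^ 2) by ring.
    assert (0 <= eps ^ 2) by nra. lra.
Qed.

Definition Kof (h2 : R) : nat := (Z.to_nat (up (4 / h2)) + 2)%nat.

Lemma reach A h2 a b : 0 < h2 -> h2 <= 1 ->
  A <= a <= A + PI -> A <= b <= A + PI ->
  exists (n0 : nat) (th0 : nat -> R), (n0 <= Kof h2)%nat /\ th0 O = a /\ th0 n0 = b /\
    (forall i, (i <= n0)%nat -> A <= th0 i <= A + PI) /\
    (forall i, (i < n0)%nat -> h2 / 8 <= Rabs (th0 (S i) - th0 i) <= h2).
Proof.
  intros Hh0 Hh1 Ha Hb.
  assert (HPI : 3 < PI) by (pose proof PI2_3_2; lra).
  assert (HPI4 : PI <= 4) by apply PI_4.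
  set (D := b - a).
  destruct (Rle_or_lt (h2 / 4) (Rabs D)) as [Hbig|Hsmall].
  - set (k := Z.to_nat (up (Rabs D / h2))).
    assert (HD0 : 0 <= Rabs D / h2) by (apply Rmult_le_pos; [apply Rabs_pos|apply Rlt_le, Rinv_0_lt_compat; lra]).
    destruct (INR_up _ HD0) as [Ek [Hk1 Hk2]]. fold k in Ek. rewrite <- Ek in Hk1, Hk2.
    assert (HkD : Rabs D < h2 * INR k).
    { apply Rmult_lt_compat_l with (r := h2) in Hk1; [|lra].
      replace (h2 * (Rabs D / h2)) with (Rabs D) in Hk1 by (field; lra). lra. }
    assert (HkD2 : h2 * INR k <= Rabs D + h2).
    { apply Rmult_le_compat_l with (r := h2) in Hk2; [|lra].
      replace (h2 * (Rabs D / h2 + 1)) with (Rabs D + h2) in Hk2 by (field; lra). lra. }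
    assert (Hk0 : 0 < INR k) by nra.
    exists k, (fun i => a + INR i * (D / INR k)).
    split; [|split; [|split; [|split]]].
    + unfold Kof. assert (Rabs D / h2 <= 4 / h2).
      { unfold Rdiv. apply Rmult_le_compat_r; [apply Rlt_le, Rinv_0_lt_compat; lra|].
        unfold D; apply Rabs_le; lra. }
      apply up_mono in H. unfold k. lia.
    + simpl. ring.
    + simpl. unfold D. field. lra.
    + intros i Hi. apply le_INR in Hi.
      assert (Ht : 0 <= INR i / INR k <= 1).
      { split. apply Rmult_le_pos; [apply pos_INR|apply Rlt_le, Rinv_0_lt_compat; lra].
        apply Rmult_le_reg_r with (r := INR k); [lra|].
        replace (INR i / INR k * INR k) with (INR i) by (field; lra). lra. }
      replace (a + INR i * (D / INR k)) with ((1 - INR i / INR k) * a + (INR i / INR k) * b)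
        by (unfold D; field; lra).
      split; nra.
    + intros i Hi. rewrite S_INR.
      replace (a + (INR i + 1) * (D / INR k) - (a + INR i * (D / INR k))) with (D / INR k) by ring.
      assert (EA : Rabs (D / INR k) = Rabs D / INR k) by (unfold Rdiv; rewrite Rabs_mult, Rabs_inv, (Rabs_right (INR k)) by lra; reflexivity).
      rewrite EA.
      split.
      * apply Rmult_le_reg_r with (r := INR k); [lra|].
        replace (Rabs D / INR k * INR k) with (Rabs D) by (field; lra). lra.
      * apply Rmult_le_reg_r with (r := INR k); [lra|].
        replace (Rabs D / INR k * INR k) with (Rabs D) by (field; lra). lra.
  - destruct (Rle_or_lt a (A + PI / 2)) as [Hl|Hr].
    + exists 2%nat, (fun i => match i with O => a | 1%nat => a + h2 / 2 | _ => b end).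
      split; [unfold Kof; lia|split; [reflexivity|split; [reflexivity|split]]].
      * intros i Hi. destruct i as [|[|]]; lra.
      * intros i Hi. destruct i as [|[|]]; [| |lia].
        -- replace (a + h2 / 2 - a) with (h2 / 2) by ring. rewrite Rabs_right; lra.
        -- unfold D in Hsmall. apply Rabs_def2 in Hsmall.
           destruct (Rle_or_lt 0 (b - (a + h2 / 2))).
           ++ rewrite Rabs_right; lra.
           ++ rewrite Rabs_left; lra.
    + exists 2%nat, (fun i => match i with O => a | 1%nat => a - h2 / 2 | _ => b end).
      split; [unfold Kof; lia|split; [reflexivity|split; [reflexivity|split]]].
      * intros i Hi. destruct i as [|[|]]; lra.
      * intros i Hi. destruct i as [|[|]]; [| |lia].
        -- replace (a - h2 / 2 - a) with (- (h2 / 2)) by ring. rewrite Rabs_left; lra.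
        -- unfold D in Hsmall. apply Rabs_def2 in Hsmall.
           destruct (Rle_or_lt 0 (b - (a - h2 / 2))).
           ++ rewrite Rabs_right; lra.
           ++ rewrite Rabs_left; lra.
Qed.

Lemma total_time_div f s n : s <> 0 ->
  total_time (fun i => f i / s) n = total_time f n / s.
Proof. intros Hs. induction n as [|n IH]; simpl. - field. exact Hs. - rewrite IH. field. exact Hs. Qed.

Lemma total_time_bound f n M : (forall i, (i < n)%nat -> 0 <= f i <= M) ->
  0 <= total_time f n <= INR n * M.
Proof.
  induction n as [|n IH]; intros H; cbn [total_time]. - simpl; lra.
  - assert (H1 : 0 <= total_time f n <= INR n * M) by (apply IH; intros; apply H; lia).
    assert (H2 : 0 <= f n <= M) by (apply H; lia).
    rewrite S_INR. lra.
Qed.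

Lemma total_time_tail f n0 j c : (forall i, (n0 <= i)%nat -> f i = c) ->
  total_time f (n0 + j) = total_time f n0 + INR j * c.
Proof.
  intros H. induction j as [|j IH].
  - rewrite Nat.add_0_r. simpl. ring.
  - rewrite Nat.add_succ_r. cbn [total_time]. rewrite IH, H by lia. rewrite S_INR. ring.
Qed.

Lemma chord_eq rho x y x' y' : cos (y - x) = cos (y' - x') ->
  nrm (dvec (ptA rho x) (ptA rho y)) = nrm (dvec (ptA rho x') (ptA rho y')).
Proof. intros H. unfold nrm. rewrite !chord_sq, H. reflexivity. Qed.

Lemma chord_le rho x y : 0 < rho -> 0 <= nrm (dvec (ptA rho x) (ptA rho y)) <= 2 * rho.
Proof.
  intros Hr. split; [apply nrm_ge0|]. pose proof (nrm_ge0 (dvec (ptA rho x) (ptA rho y))).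
  assert (E : nrm (dvec (ptA rho x) (ptA rho y)) ^ 2 = 2 * rho ^ 2 * (1 - cos (y - x)))
    by (rewrite nrm_sq; apply chord_sq).
  pose proof (COS_bound (y - x)).
  assert (nrm (dvec (ptA rho x) (ptA rho y)) ^ 2 <= (2 * rho) ^ 2) by nra.
  nra.
Qed.

Theorem lemma3 (Rad d smin smax : R) :
  0 < Rad -> 0 < d -> 0 < smin -> smin < smax ->
  exists eps0, 0 < eps0 /\
  forall eps, 0 < eps < eps0 ->
  let alpha := Rad / (Rad + d) in
  exists Tstar, 0 < Tstar /\
  exists N : R -> nat, (forall x y, x <= y -> (N x <= N y)%nat) /\
  forall Tt, Tstar <= Tt ->
  forall (left : bool) (r r' : pt),
    on_arc left Rad d r -> on_arc left Rad d r' ->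
    exists (n : nat) (P V : nat -> pt) (tau : nat -> R),
      good_path left Rad d smin smax alpha eps r r' Tt n P V tau /\
      (n <= N Tt)%nat.
Proof.
  intros HR Hd Hsmin Hss.
  assert (HPI : 3 < PI) by (pose proof PI2_3_2; lra).
  set (rho := Rad + d).
  assert (Hrho : 0 < rho) by (unfold rho; lra).
  set (al := Rad / rho).
  assert (Hal0 : 0 < al) by (unfold al; apply Rdiv_lt_0_compat; lra).
  assert (Hal1 : al < 1).
  { unfold al. apply Rmult_lt_reg_r with (r := rho); [lra|].
    replace (Rad / rho * rho) with Rad by (field; lra). unfold rho; lra. }
  set (be := (1 + al) / 2).
  assert (Hbe : 0 < 1 - be ^ 2) by (unfold be; nra).
  set (h2 := Rmin 1 (1 - be ^ 2)).
  assert (Hh2a : h2 <= 1) by apply Rmin_l.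
  assert (Hh2b : h2 <= 1 - be ^ 2) by apply Rmin_r.
  assert (Hh2 : 0 < h2) by (unfold h2; apply Rmin_glb_lt; lra).
  set (h1 := h2 / 8).
  assert (Hch1 : cos h1 < 1).
  { rewrite <- cos_0. apply cos_decreasing_1; unfold h1; lra. }
  exists (Rmin ((1 - al) / 2) ((1 - cos h1) / 8)).
  split; [apply Rmin_glb_lt; lra|].
  intros eps [He0 He1]. cbv zeta.
  assert (He2 : eps < (1 - al) / 2) by (eapply Rlt_le_trans; [exact He1|apply Rmin_l]).
  assert (He3 : eps < (1 - cos h1) / 8) by (eapply Rlt_le_trans; [exact He1|apply Rmin_r]).
  set (c := nrm (dvec (ptA rho 0) (ptA rho (h2 / 2)))).
  assert (Hc : 0 < c).
  { unfold c, nrm. apply sqrt_lt_R0. rewrite chord_sq.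
    assert (cos (h2 / 2 - 0) < 1).
    { rewrite <- cos_0. apply cos_decreasing_1; lra. }
    apply Rmult_lt_0_compat; [apply Rmult_lt_0_compat; [lra|apply pow_lt; lra]|lra]. }
  set (K := Kof h2).
  exists (2 * rho * INR K / smin + 2 * c / (smax - smin) + 1).
  assert (HT1 : 0 <= 2 * rho * INR K / smin).
  { apply Rmult_le_pos; [apply Rmult_le_pos; [lra|apply pos_INR]|apply Rlt_le, Rinv_0_lt_compat; lra]. }
  assert (HT2 : 0 < 2 * c / (smax - smin)) by (apply Rdiv_lt_0_compat; lra).
  split; [lra|].
  exists (fun x => (K + 2 * Z.to_nat (up (smin * x / (2 * c))))%nat).
  split.
  { intros x y Hxy.
    assert (smin * x / (2 * c) <= smin * y / (2 * c)).
    { unfold Rdiv. apply Rmult_le_compat_r; [apply Rlt_le, Rinv_0_lt_compat; lra|nra]. }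
    apply up_mono in H. lia. }
  intros Tt HTt left r r' Hr Hr'.
  assert (HTt0 : 0 < Tt) by lra.
  destruct (arc_rep left Rad d r HR Hd Hr) as [a [Ha Er]].
  destruct (arc_rep left Rad d r' HR Hd Hr') as [b [Hb Er']].
  destruct (reach (Aof left) h2 a b Hh2 Hh2a Ha Hb) as [n0 [th0 [Hn0 [Th0a [Th0b [Th0r Th0s]]]]]].
  set (q := if Rle_dec b (Aof left + PI / 2) then b + h2 / 2 else b - h2 / 2).
  assert (Hq : Aof left <= q <= Aof left + PI /\ Rabs (q - b) = h2 / 2).
  { unfold q. destruct (Rle_dec b (Aof left + PI / 2)).
    - replace (b + h2 / 2 - b) with (h2 / 2) by ring. rewrite Rabs_right; lra.
    - replace (b - h2 / 2 - b) with (- (h2 / 2)) by ring. rewrite Rabs_left; lra. }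
  destruct Hq as [Hqr Hqb].
  set (th := fun i => if (i <=? n0)%nat then th0 i else if Nat.even (i - n0) then b else q).
  assert (thE : forall i, (n0 <= i)%nat -> th i = if Nat.even (i - n0) then b else q).
  { intros i Hi. unfold th. destruct (Nat.leb_spec i n0).
    - assert (i = n0) by lia. subst i. rewrite Nat.sub_diag. simpl. exact Th0b.
    - reflexivity. }
  assert (thL : forall i, (i <= n0)%nat -> th i = th0 i).
  { intros i Hi. unfold th. destruct (Nat.leb_spec i n0); [reflexivity|lia]. }
  assert (Hrange : forall i, Aof left <= th i <= Aof left + PI).
  { intros i. destruct (Nat.le_gt_cases i n0).
    - rewrite thL by lia. apply Th0r; lia.
    - rewrite thE by lia. destruct (Nat.even (i - n0)); lra. }
  assert (Hpad : forall i, (n0 <= i)%nat -> Rabs (th (S i) - th i) = h2 / 2).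
  { intros i Hi. rewrite (thE i Hi), (thE (S i)) by lia.
    replace (S i - n0)%nat with (S (i - n0)) by lia. rewrite Nat.even_succ, <- Nat.negb_even.
    destruct (Nat.even (i - n0)); simpl.
    - exact Hqb.
    - rewrite Rabs_minus_sym. exact Hqb. }
  assert (Hstep : forall i, h1 <= Rabs (th (S i) - th i) <= h2).
  { intros i. destruct (Nat.lt_ge_cases i n0).
    - rewrite !thL by lia. apply Th0s. exact H.
    - rewrite Hpad by exact H. unfold h1; lra. }
  set (ch := fun i => nrm (dvec (ptA rho (th i)) (ptA rho (th (S i))))).
  assert (Hch : forall i, (n0 <= i)%nat -> ch i = c).
  { intros i Hi. unfold ch, c. apply chord_eq.
    replace (h2 / 2 - 0) with (h2 / 2) by ring.
    pose proof (Hpad i Hi) as E.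
    destruct (Rle_or_lt 0 (th (S i) - th i)).
    - rewrite Rabs_right in E by lra. rewrite E. reflexivity.
    - rewrite Rabs_left in E by lra. replace (th (S i) - th i) with (- (h2 / 2)) by lra.
      apply cos_neg. }
  set (Ln0 := total_time ch n0).
  assert (HL0 : 0 <= Ln0 <= INR n0 * (2 * rho)).
  { apply total_time_bound. intros i _. unfold ch. apply chord_le. lra. }
  assert (HKn : INR n0 <= INR K) by (apply le_INR; exact Hn0).
  assert (HLK : Ln0 <= 2 * rho * INR K) by nra.
  assert (HsT : 2 * rho * INR K <= smin * Tt).
  { assert (E : smin * (2 * rho * INR K / smin) = 2 * rho * INR K) by (field; lra).
    assert (smin * (2 * rho * INR K / smin) <= smin * Tt).
    { apply Rmult_le_compat_l; lra. }
    lra. }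
  assert (HsT2 : 2 * c <= (smax - smin) * Tt).
  { assert (E : (smax - smin) * (2 * c / (smax - smin)) = 2 * c) by (field; lra).
    assert ((smax - smin) * (2 * c / (smax - smin)) <= (smax - smin) * Tt).
    { apply Rmult_le_compat_l; lra. }
    lra. }
  set (arg := (smin * Tt - Ln0) / (2 * c)).
  assert (Harg : 0 <= arg) by (unfold arg; apply Rmult_le_pos; [lra|apply Rlt_le, Rinv_0_lt_compat; lra]).
  destruct (INR_up arg Harg) as [Em [Hm1 Hm2]].
  set (m := Z.to_nat (up arg)) in *.
  rewrite <- Em in Hm1, Hm2.
  set (n := (n0 + 2 * m)%nat).
  set (L := total_time ch n).
  assert (EL : L = Ln0 + 2 * INR m * c).
  { unfold L, n, Ln0. rewrite (total_time_tail ch n0 (2 * m) c Hch). rewrite mult_INR. simpl. ring. }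
  assert (Harg2 : 2 * c * arg = smin * Tt - Ln0) by (unfold arg; field; lra).
  assert (HL1 : smin * Tt < L) by (rewrite EL; nra).
  assert (HL2 : L <= smax * Tt) by (rewrite EL; nra).
  set (s := L / Tt).
  assert (Hs1 : smin <= s).
  { unfold s. apply Rmult_le_reg_r with (r := Tt); [lra|].
    replace (L / Tt * Tt) with L by (field; lra). lra. }
  assert (Hs2 : s <= smax).
  { unfold s. apply Rmult_le_reg_r with (r := Tt); [lra|].
    replace (L / Tt * Tt) with L by (field; lra). lra. }
  assert (Hs0 : 0 < s) by lra.
  exists n, (fun i => ptA rho (th i)),
    (fun i => pscal (s / ch i) (dvec (ptA rho (th i)) (ptA rho (th (S i))))),
    (fun i => ch i / s).
  split.
  - split; [|split; [|split; [|split]]].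
    + rewrite thL by lia. rewrite Th0a. symmetry. exact Er.
    + rewrite thE by (unfold n; lia). unfold n.
      replace (n0 + 2 * m - n0)%nat with (2 * m)%nat by lia.
      rewrite Nat.even_mul. simpl. symmetry. exact Er'.
    + intros i _. apply on_arc_ptA; auto.
    + intros i _.
      assert (Hw := cos_window al eps h1 h2 (th (S i) - th i) Hal0 Hal1
                     ltac:(unfold h1; lra) ltac:(unfold h1; lra) Hh2a
                     ltac:(fold be; exact Hh2b) He0 ltac:(lra) ltac:(lra) (Hstep i)).
      destruct Hw as [Hw1 Hw2].
      destruct (step_ok left Rad d eps s (th i) (th (S i)) HR Hd He0 ltac:(lra) Hs0
                  (on_arc_ptA left Rad d (th i) HR Hd (Hrange i))
                  (on_arc_ptA left Rad d (th (S i)) HR Hd (Hrange (S i))) Hw1 Hw2)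
        as [F1 [F2 F3]].
      assert (F2' : nrm (pscal (s / ch i) (dvec (ptA rho (th i)) (ptA rho (th (S i))))) = s) by exact F2.
      split; [exact F1|split; [rewrite F2'; lra|exact F3]].
    + rewrite total_time_div by lra. fold L. unfold s. field. split; lra.
  - unfold n. 
    assert (arg <= smin * Tt / (2 * c)).
    { unfold arg, Rdiv. apply Rmult_le_compat_r; [apply Rlt_le, Rinv_0_lt_compat; lra|lra]. }
    apply up_mono in H. unfold m. fold K in Hn0. lia.
Qed.
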